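(* The insurance game built on any stag hunt is solvable by iterated elimination of strictly dominated strategies, and the unique surviving profile is $A^n$ (every player adopts without purchasing insurance). Specifically, $X$ strictly dominates $D$ for every player, and after $D$ is eliminated for all players, $A$ strictly dominates $X$ for every player.
   Context: A stag hunt has players $I=\{1,\dots,n\}$ with strategies $\{A,D\}$, a constant $c\in\mathbb{R}$ and, for each $i$, a function $f_i$ on subsets $T\subseteq I$ with $i\in T$, strictly increasing with respect to inclusion, with $f_i(I)>c$ and $f_i(\{i\})<c$; an adopter ($A$-player) $i$ gets $f_i(T)$ where $T$ is the set of adopters, and a defector ($D$-player) gets $c$. The insurance game built on it has players $I$, each with strategy set $\{A,D,X\}$ ($A$: adopt without insurance; $D$: defect; $X$: purchase insurance, which binds the player to adopt). For a profile $s$ let $T(s)=\{j: s_j\in\{A,X\}\}$ (the adopters); a coordination failure occurs when $T(s)\neq I$. Each player $i$ has an insurance premium $\pi_i>0$ and reimbursement $R_i$, and payoffs are $u_i(s)=c$ if $s_i=D$; $u_i(s)=f_i(T(s))$ if $s_i=A$; $u_i(s)=f_i(T(s))-\pi_i+R_i\cdot\mathbf{1}[T(s)\neq I]$ if $s_i=X$. It is assumed that $\pi_i<f_i(I)-c$ and that $f_i(T)-\pi_i+R_i>c$ for every $T$ with $i\in T\neq I$ (the reimbursement more than covers any loss from adopting plus the premium). A pure strategy $a$ of player $i$ strictly dominates $b$ if $u_i(a,\sigma_{-i})>u_i(b,\sigma_{-i})$ for all profiles $\sigma_{-i}$ of the other players (in the current reduced game). $A^n$ denotes the profile where every player plays $A$.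 *)

(* Defs.v *)
From HB Require Import structures.
From mathcomp Require Import all_boot all_order all_algebra.
Set Implicit Arguments. Unset Strict Implicit. Unset Printing Implicit Defensive.
Import Order.TTheory GRing.Theory Num.Theory.
Local Open Scope ring_scope.

Inductive strat := A | D | X.

Definition strat_eqb (a b : strat) : bool :=
  match a, b with A, A | D, D | X, X => true | _, _ => false end.
Lemma strat_eqP : Equality.axiom strat_eqb.
Proof. by case; case; constructor. Qed.
HB.instance Definition _ := hasDecEq.Build strat strat_eqP.

Definition profile (n : nat) := 'I_n -> strat.

Definition adopters n (s : profile n) : {set 'I_n} :=
  [set j | s j != D].

Definition payoff (R : realFieldType) n (c : R) (f : 'I_n -> {set 'I_n} -> R)
    (prem reimb : 'I_n -> R) (s : profile n) (i : 'I_n) : R :=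
  match s i with
  | D => c
  | A => f i (adopters s)
  | X => f i (adopters s) - prem i + (if adopters s != setT then reimb i else 0)
  end.

Definition upd n (s : profile n) (i : 'I_n) (a : strat) : profile n :=
  fun j => if j == i then a else s j.

(* A reduced game is given by the strategy sets S j of each player. *)
Definition sdom (R : realFieldType) n (c : R) f prem reimb
    (S : 'I_n -> pred strat) (i : 'I_n) (a b : strat) : Prop :=
  forall sigma : profile n, (forall j, j != i -> S j (sigma j)) ->
    payoff c f prem reimb (upd sigma i b) i < payoff c f prem reimb (upd sigma i a) i.

Definition S_full n : 'I_n -> pred strat := fun _ _ => true.
Definition S_noD n : 'I_n -> pred strat := fun _ a => a != D.
Definition S_noDX n : 'I_n -> pred strat := fun _ a => (a != D) && (a != X).

Definition insurance_hyps (R : realFieldType) n (c : R)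
    (f : 'I_n -> {set 'I_n} -> R) (prem reimb : 'I_n -> R) : Prop :=
  [/\ (forall i (T T' : {set 'I_n}), i \in T -> T \proper T' -> f i T < f i T'),
      (forall i, c < f i setT),
      (forall i, f i [set i] < c),
      (forall i, 0 < prem i /\ prem i < f i setT - c) &
      (forall i (T : {set 'I_n}), i \in T -> T != setT ->
          c < f i T - prem i + reimb i)].

(* Main.v *)
Require Import Defs.
From HB Require Import structures.
From mathcomp Require Import all_boot all_order all_algebra.
Import Order.TTheory GRing.Theory Num.Theory.
Local Open Scope ring_scope.

Theorem theorem5 (R : realFieldType) (n : nat) (c : R)
    (f : 'I_n -> {set 'I_n} -> R) (prem reimb : 'I_n -> R) :
  insurance_hyps c f prem reimb ->
  [/\ (* round 1: X strictly dominates D for every player in the full game *)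
      (forall i, sdom c f prem reimb (@S_full n) i X D),
      (* round 2: after eliminating D, A strictly dominates X for every player *)
      (forall i, sdom c f prem reimb (@S_noD n) i A X) &
      (* the unique surviving profile is A^n *)
      (forall s : profile n, (forall j, S_noDX j (s j)) <-> (forall j, s j = A))].
Proof.
case=> _ _ _ H4 H5; split.
- move=> i sigma _; rewrite /payoff /upd !eqxx.
  have iT : i \in adopters (fun j => if j == i then X else sigma j).
    by rewrite inE eqxx.
  case: ifP => HT.
  + exact: H5.
  + move/negbFE/eqP: HT => ->; rewrite addr0.
    have [_ h] := H4 i; by rewrite ltrBrDl addrC -ltrBrDl.
- move=> i sigma Hs; rewrite /payoff /upd !eqxx.
  have E : forall a, a != D ->
      adopters (fun j => if j == i then a else sigma j) = setT.
    move=> a Ha; apply/setP => j; rewrite !inE.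
    by case: (eqVneq j i) => [_|Hj] //; exact: (Hs j Hj).
  rewrite !E // eqxx addr0 ltrBlDr ltrDl; by case: (H4 i).
- move=> s; split.
  + move=> H j; move: (H j); rewrite /S_noDX; by case: (s j).
  + by move=> H j; rewrite /S_noDX H.
Qed.
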